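(* Let $p$ be a prime, $\varepsilon>0$, $m=\lceil\log p-2\log\varepsilon\rceil$, $d=2^m$, and let $t_0\in\mathbb{Z}_p$ and $T=\{t_1,\ldots,t_m\}\subset\mathbb{Z}_p$ be such that the $3^m$ elements $2t_0+n_1t_1+\cdots+n_mt_m$ ($n_i\in\{0,1,2\}$) of $\mathbb{Z}_p$ are pairwise distinct. For $j=(j_1,\ldots,j_m)\in\{0,1\}^m$ let $k_j=t_0+\sum_{i:\,j_i=1}t_i \bmod p$, so that $A=\{k_j\}$. Define the unitary $U_a(A)$ on $m+1$ qubits by \[ U_a(A)\,|j\rangle|0\rangle=|j\rangle\Big(\cos\tfrac{2\pi k_j}{p}|0\rangle+\sin\tfrac{2\pi k_j}{p}|1\rangle\Big),\qquad U_a(A)\,|j\rangle|1\rangle=|j\rangle\Big(-\sin\tfrac{2\pi k_j}{p}|0\rangle+\cos\tfrac{2\pi k_j}{p}|1\rangle\Big). \] Then $U_a(A)$ can be computed by a quantum circuit of depth $\lceil\log p-2\log\varepsilon\rceil$.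
   Context: $\log$ denotes the logarithm base $2$. Circuits are built from one- and two-qubit gates; the depth is the number of layers of gates acting on disjoint qubits. $U_a(A)$ is the transition operator of the quantum finite automaton for $MOD_p=\{a^i : p\mid i\}$ with coefficient set $A$, with basis state $|q_{j,b}\rangle$ identified with $|j\rangle|b\rangle$. *)

(* Defs.v *)
From HB Require Import structures.
From mathcomp Require Import all_boot all_order all_algebra.
From mathcomp Require Import complex.
From Stdlib Require List.
From mathcomp Require Import reals exp trigo.
Set Implicit Arguments.
Unset Strict Implicit.
Unset Printing Implicit Defensive.
Import Order.TTheory GRing.Theory Num.Theory.
Local Open Scope ring_scope.
Local Open Scope complex_scope.

Section Quantum.
Variable R : realType.
Local Notation C := R[i].

Definition log2 (x : R) : R := ln x / ln 2.

Definition basis (n : nat) := {ffun 'I_n -> bool}.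

(* operators on n qubits, as matrices indexed by basis states:
   op x y = <x| op |y> *)
Definition op (n : nat) := basis n -> basis n -> C.

Definition op_id n : op n := fun x y => (x == y)%:R.
Definition op_mul n (A B : op n) : op n :=
  fun x y => \sum_(z : basis n) A x z * B z y.

Definition unitary_gate (T : finType) (u : T -> T -> C) : Prop :=
  forall x y : T, \sum_(z : T) (u z x)^* * u z y = (x == y)%:R.

Inductive gate (n : nat) :=
| Gate1 of 'I_n & (bool -> bool -> C)
| Gate2 of 'I_n & 'I_n & (bool * bool -> bool * bool -> C).

Definition gate_support n (g : gate n) : seq 'I_n :=
  match g with Gate1 q _ => [:: q] | Gate2 q1 q2 _ => [:: q1; q2] end.

Definition gate_wf n (g : gate n) : Prop :=
  match g with
  | Gate1 _ u => unitary_gate u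
  | Gate2 q1 q2 u => q1 != q2 /\ unitary_gate u
  end.

Definition gate_op n (g : gate n) : op n :=
  fun x y =>
    match g with
    | Gate1 q u => u (x q) (y q) *
        ([forall r : 'I_n, (r != q) ==> (x r == y r)])%:R
    | Gate2 q1 q2 u => u (x q1, x q2) (y q1, y q2) *
        ([forall r : 'I_n, ((r != q1) && (r != q2)) ==> (x r == y r)])%:R
    end.

Definition layer n := seq (gate n).

Definition layer_wf n (L : layer n) : Prop :=
  List.Forall (@gate_wf n) L /\ uniq (flatten (map (@gate_support n) L)).

Definition layer_op n (L : layer n) : op n :=
  foldr (fun g acc => op_mul (gate_op g) acc) (@op_id n) L.

(* a circuit: a sequence of layers, the first one applied first *)
Definition circuit n := seq (layer n).

Definition circuit_wf n (c : circuit n) : Prop :=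
  List.Forall (@layer_wf n) c.

Definition circuit_op n (c : circuit n) : op n :=
  foldl (fun acc L => op_mul (layer_op L) acc) (@op_id n) c.

Definition depth n (c : circuit n) : nat := size c.

Definition computable_in_depth n (U : op n) (D : nat) : Prop :=
  exists c : circuit n,
    [/\ circuit_wf c, depth c = D & forall x y, circuit_op c x y = U x y].

Definition kj (p m : nat) (t0 : 'Z_p) (t : 'I_m -> 'Z_p) (j : 'I_m -> bool)
  : 'Z_p := t0 + \sum_(i < m | j i) t i.

(* the transition operator U_a(A) on m+1 qubits: qubits widen_ord i (i < m)
   hold |j>, qubit ord_max is the last qubit |b>. *)
Definition Ua (p m : nat) (t0 : 'Z_p) (t : 'I_m -> 'Z_p) : op m.+1 :=
  fun x y =>
    let j := fun i : 'I_m => y (widen_ord (leqnSn m) i) in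
    let th := 2 * pi * (nat_of_ord (kj t0 t j))%:R / p%:R in
    let c := (cos th)%:C in
    let s := (sin th)%:C in
    ([forall i : 'I_m, x (widen_ord (leqnSn m) i) == j i])%:R *
    match y ord_max, x ord_max with
    | false, false => c     (* <0|U|0> *)
    | false, true  => s     (* <1|U|0> *)
    | true,  false => - s   (* <0|U|1> *)
    | true,  true  => c     (* <1|U|1> *)
    end.

End Quantum.

(* Main.v *)
Require Import Defs.
From HB Require Import structures.
From mathcomp Require Import all_boot all_order all_algebra.
From mathcomp Require Import complex.
From mathcomp Require Import reals exp trigo.
From mathcomp Require Import boolp.
From mathcomp Require Import ring lra.
Import Order.TTheory GRing.Theory Num.Theory.
Local Open Scope ring_scope.

Section Helpers.
Variable R : realType.
Local Open Scope complex_scope.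
Local Notation C := R[i].
Variable m : nat.
Local Notation w := (widen_ord (leqnSn m)).
Local Notation mx := (@ord_max m).

Definition rot (th : R) (a b : bool) : C :=
  match b, a with
  | false, false => (cos th)%:C
  | false, true => (sin th)%:C
  | true, false => (- sin th)%:C
  | true, true => (cos th)%:C
  end.

Definition jof (y : basis m.+1) : 'I_m -> bool := fun k => y (w k).

Definition Rop (phi : ('I_m -> bool) -> R) : op R m.+1 := fun x y =>
  ([forall k : 'I_m, x (w k) == jof y k])%:R * rot (phi (jof y)) (x mx) (y mx).

Definition upd (y : basis m.+1) (b : bool) : basis m.+1 :=
  [ffun r => if r == mx then b else y r].

Lemma w_neq (k : 'I_m) : (w k == mx) = false.
Proof. by apply/negbTE; rewrite -val_eqE /= neq_ltn ltn_ord. Qed.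

Lemma not_max (r : 'I_m.+1) : r != mx -> exists k, r = w k.
Proof.
move=> H; have Hr : (val r < m)%N.
  by move: (ltn_ord r); rewrite ltnS leq_eqVlt => /orP [/eqP E|//]; case/eqP: H; apply/val_inj.
by exists (Ordinal Hr); apply/val_inj.
Qed.

Lemma simP (x y : basis m.+1) :
  [forall k : 'I_m, x (w k) == jof y k] -> x = upd y (x mx).
Proof.
move=> /forallP H; apply/ffunP => r; rewrite ffunE.
case: eqP => [->//|/eqP /not_max [k ->]]; exact/eqP/H.
Qed.

Lemma upd_sim (y : basis m.+1) b : jof (upd y b) = jof y.
Proof. by apply/funext => k; rewrite /jof ffunE w_neq. Qed.

Lemma upd_mx (y : basis m.+1) b : upd y b mx = b.
Proof. by rewrite ffunE eqxx. Qed.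

Lemma sim_upd (x y : basis m.+1) b :
  [forall k : 'I_m, x (w k) == jof (upd y b) k] = [forall k : 'I_m, x (w k) == jof y k].
Proof. by rewrite upd_sim. Qed.

Lemma rotD a b phi psi :
  \sum_(c : bool) rot phi a c * rot psi c b = rot (phi + psi) a b.
Proof.
rewrite big_bool; case: a; case: b => /=;
rewrite -!rmorphM -rmorphD ?cosD ?sinD; congr (_ %:C); ring.
Qed.


Lemma upd_eq (y : basis m.+1) b b' : (upd y b == upd y b') = (b == b').
Proof.
apply/eqP/eqP => [E|->//]; by rewrite -(upd_mx y b) E upd_mx.
Qed.

Lemma upd_refl (y : basis m.+1) b : [forall k : 'I_m, upd y b (w k) == jof y k].
Proof. by apply/forallP => k; rewrite ffunE w_neq. Qed.

Lemma Rop_mul phi psi :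
  forall x y, op_mul (Rop phi) (Rop psi) x y = Rop (fun j => phi j + psi j) x y.
Proof.
move=> x y; rewrite /op_mul.
transitivity (\sum_(z : basis m.+1) \sum_(b : bool)
   (z == upd y b)%:R * (Rop phi x z * Rop psi z y)).
  apply: eq_bigr => z _; rewrite -big_distrl /=.
  case H: [forall k : 'I_m, z (w k) == jof y k].
    rewrite big_bool (simP _ _ H) !upd_eq; by case: (z mx) => /=; rewrite ?addr0 ?add0r mul1r.
  by rewrite /Rop H /= !mul0r !mulr0.
rewrite exchange_big /=.
transitivity (\sum_(b : bool) Rop phi x (upd y b) * Rop psi (upd y b) y).
  apply: eq_bigr => b _.
  rewrite (bigD1 (upd y b)) //= eqxx mul1r big1 ?addr0 // => z /negbTE ->.
  by rewrite mul0r.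
rewrite /Rop.
under eq_bigr => b _ do rewrite sim_upd upd_sim upd_mx upd_refl mul1r -mulrA.
by rewrite -big_distrr /= rotD.
Qed.

Lemma rot0 a b : rot 0 a b = (a == b)%:R.
Proof. by rewrite /rot cos0 sin0 oppr0; case: a; case: b; rewrite /= ?rmorph0 ?rmorph1. Qed.

Lemma Rop_id : forall x y, @op_id R m.+1 x y = Rop (fun _ => 0) x y.
Proof.
move=> x y; rewrite /op_id /Rop rot0.
case H: [forall k : 'I_m, x (w k) == jof y k].
  rewrite mul1r.
  case E: (x == y).
    by move/eqP: E => ->; rewrite eqxx.
  move: E; rewrite (simP _ _ H).
  have Hy : [forall k : 'I_m, y (w k) == jof y k] by apply/forallP => k.
  rewrite {2}(simP _ _ Hy) upd_eq upd_mx.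
  by move=> ->.
rewrite /= mul0r; case E: (x == y) => //.
by move: H; rewrite (eqP E); move/negbT; rewrite negb_forall => /existsP [k]; rewrite eqxx.
Qed.


Definition cu (f : bool -> R) : bool * bool -> bool * bool -> C :=
  fun a b => (a.1 == b.1)%:R * rot (f b.1) a.2 b.2.

Lemma conjR (a : R) : Num.conj (a%:C : C) = a%:C.
Proof. exact: conjc_real. Qed.

Lemma cu_unitary f : unitary_gate (cu f).
Proof.
move=> x y.
have -> : \sum_(z : bool * bool) (cu f z x)^* * cu f z y =
   \sum_(a : bool) \sum_(b : bool) (cu f (a, b) x)^* * cu f (a, b) y.
  by rewrite pair_bigA; apply: eq_bigr => [[a b]] _.
case: x => a b; case: y => c d.
rewrite !big_bool /cu /=.
case: a; case: b; case: c; case: d => /=; rewrite /rot !mul1r !mul0r ?rmorph0 ?mul0r ?mulr0 ?addr0 ?add0r //;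
  rewrite !conjR -!rmorphM -rmorphD;
  first [ rewrite -(rmorph1 (real_complex R)) | rewrite -(rmorph0 (real_complex R)) ];
  congr (_ %:C);
  first [ring | rewrite -(cos2Dsin2 (f true)); ring | rewrite -(cos2Dsin2 (f false)); ring].
Qed.


Lemma gate_Rop (i : 'I_m) f x y :
  gate_op (Gate2 (w i) mx (cu f)) x y = Rop (fun j => f (j i)) x y.
Proof.
rewrite /gate_op /Rop /cu /jof /=.
have -> : [forall k, x (w k) == y (w k)] = (x (w i) == y (w i)) &&
    [forall r, (r != w i) && (r != mx) ==> (x r == y r)].
  apply/forallP/andP => [H|[H1 /forallP H2] k].
    split; first exact: H.
    by apply/forallP => r; apply/implyP => /andP [ri /not_max [k ->]]; exact: H.
  case: (eqVneq (w k) (w i)) => [->//|ne].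
  by apply: (implyP (H2 (w k))); rewrite ne w_neq.
by case: (x (w i) == y (w i)); case: [forall r, _]; rewrite /= ?mul1r ?mul0r ?mulr1 ?mulr0.
Qed.

Lemma gate_wf_cu (i : 'I_m) f : gate_wf (Gate2 (w i) mx (cu f)).
Proof. by split; [rewrite w_neq | exact: cu_unitary]. Qed.


Lemma op_mul_id (A : op R m.+1) : op_mul A (@op_id R m.+1) = A.
Proof.
apply/funext => x; apply/funext => y; rewrite /op_mul /op_id.
rewrite (bigD1 y) //= eqxx mulr1 big1 ?addr0 // => z /negbTE ->.
by rewrite mulr0.
Qed.

Lemma gate_RopE (i : 'I_m) f :
  gate_op (Gate2 (w i) mx (cu f)) = Rop (fun j => f (j i)).
Proof. by apply/funext => x; apply/funext => y; exact: gate_Rop. Qed.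

Definition Lay (F : 'I_m -> bool -> R) (i : 'I_m) : layer R m.+1 :=
  [:: Gate2 (w i) mx (cu (F i))].

Lemma fold_Rop F (s : seq 'I_m) psi :
  foldl (fun acc L => op_mul (layer_op L) acc) (Rop psi) [seq Lay F i | i <- s]
  = Rop (fun j => psi j + \sum_(i <- s) F i (j i)).
Proof.
elim: s psi => [|i s IH] psi /=.
  by congr Rop; apply/funext => j; rewrite big_nil addr0.
rewrite /layer_op /= op_mul_id gate_RopE.
have -> : op_mul (Rop (fun j => F i (j i))) (Rop psi) =
          Rop (fun j => F i (j i) + psi j).
  by apply/funext => x; apply/funext => y; exact: Rop_mul.
rewrite IH; congr Rop; apply/funext => j; rewrite big_cons; ring.
Qed.

Lemma periodn (f : R -> R) T : periodic f T -> forall x n, f (x + T *+ n) = f x.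
Proof.
move=> H x; elim=> [|n IH]; first by rewrite mulr0n addr0.
by rewrite mulrSr addrA H.
Qed.


Lemma Rop_Ua p (t0 : 'Z_p) (t : 'I_m -> 'Z_p) Phi :
  (forall j, cos (Phi j) = cos (2 * pi * (nat_of_ord (kj t0 t j))%:R / p%:R) /\
             sin (Phi j) = sin (2 * pi * (nat_of_ord (kj t0 t j))%:R / p%:R)) ->
  forall x y, Rop Phi x y = @Ua R p m t0 t x y.
Proof.
move=> H x y; have [E1 E2] := H (jof y).
rewrite /Rop /rot E1 E2 /Ua /jof; cbv zeta.
by case: (x mx); case: (y mx); rewrite ?rmorphN.
Qed.

Lemma Lay_wf F s : List.Forall (@layer_wf R m.+1) [seq Lay F i | i <- s].
Proof.
elim: s => [|i s IH] /=; constructor => //.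
split; first by constructor; [exact: gate_wf_cu | constructor].
by rewrite /= inE w_neq.
Qed.

End Helpers.
Arguments Lay {R m}. Arguments Lay_wf {R m}. Arguments fold_Rop {R m}. Arguments Rop {R m}. Arguments Rop_id {R m}. Arguments Rop_Ua {R m}.

Theorem corollary1 (R : realType) (p : nat) (eps : R) (m : nat)
    (t0 : 'Z_p) (t : 'I_m -> 'Z_p) :
  prime p -> 0 < eps ->
  (m%:Z = Num.ceil (log2 p%:R - 2 * log2 eps))%R ->
  (0 < m)%N ->
  injective (fun n : {ffun 'I_m -> 'I_3} =>
               t0 *+ 2 + \sum_(i < m) t i *+ (nat_of_ord (n i))) ->
  computable_in_depth (@Ua R p m t0 t) m.
Proof.
move=> pp _ _ m0 _.
pose c0 : R := 2 * pi * (nat_of_ord t0)%:R / p%:R.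
pose th (i : 'I_m) : R := 2 * pi * (nat_of_ord (t i))%:R / p%:R.
pose F (i : 'I_m) (b : bool) : R := (if val i == 0%N then c0 else 0) + (if b then th i else 0).
exists [seq Lay F i | i <- enum 'I_m]; split.
- exact: Lay_wf.
- by rewrite /depth size_map size_enum_ord.
move=> x y; rewrite /circuit_op.
have -> : @op_id R m.+1 = Rop (fun _ => 0).
  by apply/funext => a; apply/funext => b; exact: Rop_id.
rewrite fold_Rop; apply: Rop_Ua => j.
have p1 : (1 < p)%N by exact: prime_gt1.
have p0 : (p%:R : R) != 0 by rewrite pnatr_eq0 -lt0n ltnW.
pose N := (nat_of_ord t0 + \sum_(i < m | j i) nat_of_ord (t i))%N.
have Ek : nat_of_ord (kj t0 t j) = (N %% p)%N.
  rewrite -val_Zp_nat // /N natrD natr_sum /kj.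
  congr (nat_of_ord (_ + _)); first by rewrite natr_Zp.
  by apply: eq_bigr => i _; rewrite natr_Zp.
have key : 0 + \sum_(i <- enum 'I_m) F i (j i) =
    2 * pi * (nat_of_ord (kj t0 t j))%:R / p%:R + (pi *+ 2) *+ (N %/ p).
  rewrite add0r big_enum /F big_split.
  rewrite Ek (bigD1 (Ordinal m0)) //= big1 ?addr0; last first.
    move=> i ne; rewrite ifF //; apply: contraNF ne => /eqP h.
    by apply/eqP/val_inj.
  have Es : \sum_(i in 'I_m) (if j i then th i else 0) =
      2 * pi * (\sum_(i < m | j i) nat_of_ord (t i))%:R / p%:R.
    rewrite natr_sum mulr_sumr mulr_suml [RHS]big_mkcond /=; apply: eq_big => //.
  rewrite Es.
  have EN : (N%:R : R) = (N %/ p)%:R * p%:R + (N %% p)%:R by rewrite -natrM -natrD -divn_eq.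
  have EN2 : (N%:R : R) = (nat_of_ord t0)%:R + (\sum_(i < m | j i) nat_of_ord (t i))%:R.
    by rewrite /N natrD.
  have E3 : ((N %% p)%:R : R) = (nat_of_ord t0)%:R + (\sum_(i < m | j i) nat_of_ord (t i))%:R - (N %/ p)%:R * p%:R.
    by rewrite -EN2 EN; ring.
  rewrite E3 -[pi *+ 2]mulr_natr -[_ *+ (N %/ p)]mulr_natr /c0.
  by field.
rewrite key; split; [exact: periodn (@cosD2pi R) _ _ | exact: periodn (@sinD2pi R) _ _].
Qed.
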